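(* For every non-increasing function $\varphi:(0,1]\to\mathbb{R}^+$, the set $N_\varphi$ is a normal subgroup of $G$.
   Context: $\mathbb{D}^2$ is the closed unit disc with normalised Lebesgue measure $\mathrm{Area}$ ($\mathrm{Area}(\mathbb{D}^2)=1$); $G$ is the group of area-preserving homeomorphisms of $\mathbb{D}^2$ that are the identity on a neighbourhood of $\partial\mathbb{D}^2$. A topological disc is the image of a closed euclidean disc under an element of $G$. The size of $g\in G$ is the infimum of $\mathrm{Area}(D)$ over topological discs $D$ containing the support (closure of the set of non-fixed points) of $g$. For $\rho\in(0,1]$, $\|g\|_\rho$ is the least integer $m$ such that $g$ is a product of $m$ elements of $G$ of size less than $\rho$. $N_\varphi=\{g\in G:\|g\|_\rho=O(\varphi(\rho))\}$, where $\psi(\rho)=O(\varphi(\rho))$ means there is $K>0$ with $\psi(\rho)<K\varphi(\rho)$ for all sufficiently small $\rho>0$. *)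

(* Defs.v *)
From HB Require Import structures.
From mathcomp Require Import all_boot all_order all_algebra.
From mathcomp Require Import all_classical all_reals all_analysis.
Set Implicit Arguments. Unset Strict Implicit. Unset Printing Implicit Defensive.
Import Order.TTheory GRing.Theory Num.Theory.
Import numFieldNormedType.Exports.
Local Open Scope classical_set_scope.
Local Open Scope ring_scope.

Definition cdisc (R : realType) (c : R * R) (r : R) : set (R * R) :=
  [set x | (x.1 - c.1) ^+ 2 + (x.2 - c.2) ^+ 2 <= r ^+ 2].

Definition unit_disc (R : realType) : set (R * R) := cdisc (0, 0) 1.

Definition leb2 (R : realType) : set (R * R) -> \bar R :=
  (@lebesgue_measure R \x @lebesgue_measure R)%E.

(* Normalised area: Area(D^2) = 1. *)
Definition area (R : realType) (A : set (R * R)) : \bar R :=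
  (leb2 A * (pi^-1)%:E)%E.

(* An area-preserving homeomorphism of D^2 which is the
   identity near the boundary is represented by its extension by the
   identity to the whole plane: a homeomorphism f of R^2 which is the
   identity outside a disc of radius r < 1 and preserves Lebesgue measure. *)
Definition in_G (R : realType) (f : R * R -> R * R) : Prop :=
  (exists g : R * R -> R * R,
      continuous f /\ continuous g /\ cancel f g /\ cancel g f) /\
  (exists r : R, 0 < r < 1 /\
      forall x : R * R, r ^+ 2 < x.1 ^+ 2 + x.2 ^+ 2 -> f x = x) /\
  (forall A : set (R * R), measurable A -> leb2 (f @^-1` A) = leb2 A).

Definition top_disc (R : realType) (D : set (R * R)) : Prop :=
  exists (h : R * R -> R * R) (c : R * R) (r : R),
    in_G h /\ 0 < r /\ cdisc c r `<=` @unit_disc R /\ D = h @` cdisc c r.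

Definition support (R : realType) (g : R * R -> R * R) : set (R * R) :=
  closure [set x | g x <> x].

Definition gsize (R : realType) (g : R * R -> R * R) : \bar R :=
  ereal_inf [set area D | D in [set D | top_disc D /\ support g `<=` D]].

Definition comp_list (R : realType) (s : seq (R * R -> R * R)) :
  R * R -> R * R := foldr (fun f acc => f \o acc) id s.

Definition frag_norm (R : realType) (g : R * R -> R * R) (rho : R) : \bar R :=
  ereal_inf [set (m%:R)%:E | m in
    [set m : nat | exists s : seq (R * R -> R * R),
       size s = m /\
       (forall f, f \in s -> in_G f /\ (gsize f < rho%:E)%E) /\
       g = comp_list s]].

Definition N_phi (R : realType) (phi : R -> R) : set (R * R -> R * R) :=
  [set g | in_G g /\
    exists K : R, 0 < K /\ exists delta : R, 0 < delta /\
      forall rho : R, 0 < rho -> rho <= 1 -> rho < delta ->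
        (frag_norm g rho < (K * phi rho)%:E)%E].

Definition normal_subgroup_of_G (R : realType) (N : set (R * R -> R * R)) :
  Prop :=
  N `<=` [set f | in_G f] /\
  N id /\
  (forall g h, N g -> N h -> N (g \o h)) /\
  (forall g g', N g -> cancel g g' -> cancel g' g -> N g') /\
  (forall g h h', N g -> in_G h -> cancel h h' -> cancel h' h ->
     N (h \o g \o h')).

(* Main.v *)
Set Warnings "-all".
Require Import Defs.
From mathcomp Require Import all_boot all_order all_algebra.
From mathcomp Require Import all_classical all_reals all_analysis.
From mathcomp Require Import lra.
Import Order.TTheory GRing.Theory Num.Theory.
Import numFieldNormedType.Exports.
Local Open Scope classical_set_scope.
Local Open Scope ring_scope.


Section S.
Variable R : realType.

Definition box (q1 q2 : rat) (n : nat) : set (R * R) :=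
  `](ratr q1 - n.+1%:R^-1), (ratr q1 + n.+1%:R^-1)[ `*`
  `](ratr q2 - n.+1%:R^-1), (ratr q2 + n.+1%:R^-1)[.

Lemma open_measurable2 (U : set (R * R)) : open U -> measurable U.
Proof.
move=> oU.
have -> : U = \bigcup_(q1 : rat) \bigcup_(q2 : rat) \bigcup_(n : nat)
   [set y | box q1 q2 n `<=` U /\ box q1 q2 n y].
  apply/seteqP; split; last first.
    by move=> x [q1 _ [q2 _ [n _ [H1 H2]]]]; exact: H1.
  move=> x Ux.
  have : nbhs x U by rewrite openE in oU; exact: oU.
  case/nbhs_ballP => e /= e0 He.
  pose n := Num.truncn (2 / e).
  have hn : n.+1%:R^-1 < e / 2.
    rewrite -[X in _ < X]invf_div ltf_pV2 ?posrE ?divr_gt0 //.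
    exact: archimedean.Num.Theory.truncnS_gt.
  set d := n.+1%:R^-1 : R.
  have d0 : 0 < d by rewrite invr_gt0.
  have lt1 : x.1 - d < x.1 + d by rewrite ltrD2l gtrN.
  have lt2 : x.2 - d < x.2 + d by rewrite ltrD2l gtrN.
  have [q1 /[!in_itv] /= /andP[q1a q1b]] := rat_in_itvoo lt1.
  have [q2 /[!in_itv] /= /andP[q2a q2b]] := rat_in_itvoo lt2.
  exists q1 => //; exists q2 => //; exists n => //.
  have sub : box q1 q2 n `<=` U.
    move=> y [/=]; rewrite !in_itv /= => /andP[y1a y1b] /andP[y2a y2b].
    apply: He; split => /=; rewrite -ball_normE /ball_ /=.
      rewrite -/d in y1a y1b hn; rewrite ltr_norml; apply/andP; split; lra.
    rewrite -/d in y2a y2b hn; rewrite ltr_norml; apply/andP; split; lra.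
  split => //.
  split; rewrite /= in_itv /=; apply/andP; split.
  1-4: rewrite -/d; lra.
apply: (@bigcupT_measurable_rat _ (R * R)%type) => q1.
apply: (@bigcupT_measurable_rat _ (R * R)%type) => q2.
apply: bigcupT_measurable => n.
have [H|H] := pselect (box q1 q2 n `<=` U).
  have -> : [set y | box q1 q2 n `<=` U /\ box q1 q2 n y] = box q1 q2 n.
    by apply/seteqP; split => y //= [].
  by apply: measurableX; exact: measurable_itv.
have -> : [set y | box q1 q2 n `<=` U /\ box q1 q2 n y] = set0.
  by apply/seteqP; split => y //= [].
exact: measurable0.
Qed.

Lemma cont_mfun1 (f : R * R -> R) : continuous f -> measurable_fun setT f.
Proof.
move=> /continuousP cf; apply: (measurability _ (measurable_realfun.RGenOpens.measurableE R)).
move=> _ [_ [a [b ->] <-]]; rewrite setTI; apply: open_measurable2.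
exact/cf/interval_open.
Qed.

Lemma fst_cont : continuous (@fst R R).
Proof. by move=> x; exact: cvg_fst. Qed.
Lemma snd_cont : continuous (@snd R R).
Proof. by move=> x; exact: cvg_snd. Qed.

Lemma cont_mfun (f : R * R -> R * R) : continuous f -> measurable_fun setT f.
Proof.
move=> cf; apply/measurable_fun_pairP; split; apply: cont_mfun1 => x.
  exact: continuous_comp (cf x) (fst_cont (f x)).
exact: continuous_comp (cf x) (snd_cont (f x)).
Qed.

Lemma cont_preimage (f : R * R -> R * R) A : continuous f -> measurable A ->
  measurable (f @^-1` A).
Proof. move=> cf mA; have := @cont_mfun f cf measurableT A mA; by rewrite setTI. Qed.

Lemma in_G_id : in_G (@id (R * R)).
Proof.
split; first by exists id; split; [move=> x; exact: cvg_id|split; [move=> x; exact: cvg_id|by []]].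
split; last by [].
exists (1/2); split; last by [].
apply/andP; split; lra.
Qed.

Lemma in_G_comp (f g : R * R -> R * R) : in_G f -> in_G g -> in_G (f \o g).
Proof.
move=> [[fi [cf [cfi [c1 c2]]]] [[r1 [/andP[r10 r11] Hr1]] Hm1]].
move=> [[gi [cg [cgi [d1 d2]]]] [[r2 [/andP[r20 r21] Hr2]] Hm2]].
split.
  exists (gi \o fi); split; first by move=> x; exact: continuous_comp (cg x) (cf (g x)).
  split; first by move=> x; exact: continuous_comp (cfi x) (cgi (fi x)).
  by split => x /=; rewrite ?c1 ?d1 ?d2 ?c2.
split.
  exists (Num.max r1 r2); split.
    apply/andP; split; first by rewrite lt_max r10.
    by rewrite gt_max r11 r21.
  move=> x Hx /=.
  have hm1 : r1 <= Num.max r1 r2 by rewrite le_max lexx.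
  have hm2 : r2 <= Num.max r1 r2 by rewrite le_max lexx orbT.
  move: Hx hm1 hm2; set m := Num.max r1 r2 => Hx hm1 hm2.
  have m0 : 0 <= m by apply: le_trans (ltW r10) hm1.
  have s1 : r1 ^+ 2 <= m ^+ 2 by rewrite ler_sqr ?nnegrE ?(ltW r10) ?(ltW r20).
  have s2 : r2 ^+ 2 <= m ^+ 2 by rewrite ler_sqr ?nnegrE ?(ltW r10) ?(ltW r20).
  rewrite Hr2; last by lra.
  by rewrite Hr1 //; lra.
move=> A mA.
have -> : (f \o g) @^-1` A = g @^-1` (f @^-1` A) by [].
rewrite Hm2; first exact: Hm1.
exact: cont_preimage.
Qed.

Lemma in_G_inv (f f' : R * R -> R * R) :
  in_G f -> cancel f f' -> cancel f' f -> in_G f'.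
Proof.
move=> [[fi [cf [cfi [c1 c2]]]] [[r [r01 Hr]] Hm]] h1 h2.
have ef : f' = fi by apply: funext => x; rewrite -[X in f' X]c2 h1.
subst f'.
split; first by exists f; split.
split.
  exists r; split => // x Hx.
  by rewrite -{1}(Hr x Hx) c1.
move=> A mA.
have mB := @cont_preimage fi A cfi mA.
have E := Hm _ mB.
have EA : f @^-1` (fi @^-1` A) = A by apply/seteqP; split => x /=; rewrite c1.
by rewrite EA in E.
Qed.


Set Implicit Arguments. Unset Strict Implicit.
Lemma support_inv (f f' : R * R -> R * R) :
  cancel f f' -> cancel f' f -> Defs.support f' = Defs.support f.
Proof.
move=> h1 h2; rewrite /Defs.support.
suff -> : [set x | f' x <> x] = [set x | f x <> x] by [].
apply/seteqP; split => x /= h e; apply: h.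
  by rewrite -{1}e h1.
by rewrite -{1}e h2.
Qed.

Lemma gsize_inv (f f' : R * R -> R * R) :
  cancel f f' -> cancel f' f -> gsize f' = gsize f.
Proof. by move=> h1 h2; rewrite /gsize (@support_inv f f' h1 h2). Qed.

Lemma img_preim (h h' : R * R -> R * R) (D : set (R * R)) :
  cancel h h' -> cancel h' h -> h @` D = h' @^-1` D.
Proof.
move=> c c'; apply/seteqP; split => x.
  by move=> [d Dd <-] /=; rewrite c.
by move=> Dx; exists (h' x) => //; rewrite c'.
Qed.

Lemma cdisc_measurable (c : R * R) (r : R) : measurable (cdisc c r).
Proof.
have mg : measurable_fun setT (fun x : R * R => (x.1 - c.1) ^+ 2 + (x.2 - c.2) ^+ 2).
  apply: measurable_realfun.measurable_funD; apply: measurable_realfun.measurable_funX; apply: measurable_realfun.measurable_funB.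
  - exact: measurable_fst.
  - exact: measurable_cst.
  - exact: measurable_snd.
  - exact: measurable_cst.
have := mg measurableT _ (measurable_itv `]-oo, r ^+ 2]).
rewrite setTI; congr measurable; apply/seteqP; split => x /=;
  by rewrite in_itv /=.
Qed.

Lemma top_disc_measurable (D : set (R * R)) : top_disc D -> measurable D.
Proof.
move=> [k [c [r [[[ki [ck [cki [k1 k2]]]] _] [_ [_ ->]]]]]].
rewrite (img_preim _ k1 k2); apply: cont_preimage => //.
exact: cdisc_measurable.
Qed.


Lemma gsize_conj (f h h' : R * R -> R * R) :
  in_G h -> cancel h h' -> cancel h' h -> (gsize (h \o f \o h') <= gsize f)%E.
Proof.
move=> hG c c'.
have h'G := @in_G_inv h h' hG c c'.
have [[hi [ch [chi _]]] _] := hG.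
have [[h'i [ch' _]] [_ Hm']] := h'G.
apply: ereal_inf_le_tmp => _ [D [tD sD] <-].
exists (h @` D); last first.
  rewrite /area (img_preim _ c c') Hm' //; exact: top_disc_measurable.
split.
  move: tD => [k [cc [r [kG [r0 [sub ->]]]]]].
  exists (h \o k), cc, r; split; first exact: (@in_G_comp h k).
  by split => //; split => //; rewrite image_comp.
rewrite (img_preim _ c c').
have cl : closed (h' @^-1` Defs.support f).
  exact: (proj1 (continuous_closedP h') ch' _ (@closed_closure _ _)).
suff sub1 : Defs.support (h \o f \o h') `<=` h' @^-1` Defs.support f.
  by move=> x /sub1 /sD.
rewrite ((closure_id _).1 cl) /Defs.support.
apply: closureS => x /= hx; apply: subset_closure => /= e.
by apply: hx; rewrite e c'.
Qed.


Definition FS (g : R * R -> R * R) (rho : R) : set nat :=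
  [set m : nat | exists s : seq (R * R -> R * R),
       size s = m /\
       (forall f, f \in s -> in_G f /\ (gsize f < rho%:E)%E) /\
       g = comp_list s].

Lemma frag_le g rho m : FS g rho m -> (frag_norm g rho <= (m%:R)%:E)%E.
Proof. by move=> Hm; apply: ereal_inf_lbound; exists m. Qed.

Lemma frag_lt g rho (x : R) : (frag_norm g rho < x%:E)%E ->
  exists m, FS g rho m /\ (m%:R < x).
Proof.
move=> /ereal_inf_lt [_ [m Hm <-]]; rewrite lte_fin => lt.
by exists m.
Qed.

Lemma comp_list_cat (s1 s2 : seq (R * R -> R * R)) x :
  comp_list (s1 ++ s2) x = comp_list s1 (comp_list s2 x).
Proof. by elim: s1 => //= f s IH; rewrite IH. Qed.

Lemma inv_list rho (s : seq (R * R -> R * R)) :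
  (forall f, f \in s -> in_G f /\ (gsize f < rho%:E)%E) ->
  exists s', size s' = size s /\
    (forall f, f \in s' -> in_G f /\ (gsize f < rho%:E)%E) /\
    cancel (comp_list s) (comp_list s') /\ cancel (comp_list s') (comp_list s).
Proof.
elim: s => [|f t IH] H.
  by exists [::]; split => //; split => //.
have [fG fs] := H f (mem_head _ _).
have [|t' [st' [Ht' [ct1 ct2]]]] := IH.
  by move=> g gt; apply: H; rewrite in_cons gt orbT.
have [[f' [_ [_ [c1 c2]]]] _] := fG.
exists (t' ++ [:: f']); split; first by rewrite size_cat /= st' addn1.
split.
  move=> g; rewrite mem_cat => /orP[/Ht'//|]; rewrite mem_seq1 => /eqP ->.
  split; first exact: (@in_G_inv f f').
  by rewrite (gsize_inv c1 c2).
split => x; rewrite comp_list_cat /=.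
  by rewrite c1 ct1.
by rewrite ct2 c2.
Qed.


Lemma comp_list_map (h h' : R * R -> R * R) (s : seq (R * R -> R * R)) :
  cancel h h' -> cancel h' h ->
  h \o comp_list s \o h' = comp_list (map (fun f => h \o f \o h') s).
Proof.
move=> c c'; apply: funext => x.
elim: s => [|f t IH] /=; first by rewrite c'.
by rewrite -IH /= c.
Qed.

End S.

Theorem proposition3 (R : realType) (phi : R -> R) :
  (forall x y : R, 0 < x -> x <= y -> y <= 1 -> phi y <= phi x) ->
  (forall x : R, 0 < x -> x <= 1 -> 0 < phi x) ->
  normal_subgroup_of_G (N_phi phi).
Proof.
move=> _ phi0.
split; first by move=> g [].
split.
  split; first exact: in_G_id.
  exists 1; split => //; exists 1; split => // rho r0 r1 _.
  apply: (@le_lt_trans _ _ ((0%N)%:R)%:E).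
    by apply: frag_le; exists [::].
  by rewrite lte_fin mul1r phi0.
split.
  move=> g h [gG [Kg [Kg0 [dg [dg0 Hg]]]]] [hG [Kh [Kh0 [dh [dh0 Hh]]]]].
  split; first exact: in_G_comp.
  exists (Kg + Kh); split; first by rewrite addr_gt0.
  exists (Num.min dg dh); split; first by rewrite lt_min dg0.
  move=> rho r0 r1; rewrite lt_min => /andP[rg rh].
  have [m1 [[s1 [e1 [H1 ->]]] lt1]] := frag_lt (Hg rho r0 r1 rg).
  have [m2 [[s2 [e2 [H2 ->]]] lt2]] := frag_lt (Hh rho r0 r1 rh).
  apply: (@le_lt_trans _ _ ((m1 + m2)%N%:R)%:E).
    apply: frag_le; exists (s1 ++ s2); split; first by rewrite size_cat e1 e2.
    split.
      by move=> f; rewrite mem_cat => /orP[/H1|/H2].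
    by apply: funext => x; rewrite comp_list_cat.
  by rewrite lte_fin natrD mulrDl ltrD.
split.
  move=> g g' [gG [K [K0 [d [d0 Hg]]]]] c1 c2.
  split; first exact: (@in_G_inv _ g g').
  exists K; split => //; exists d; split => // rho r0 r1 rd.
  have [m [[s [e [H eg]]] lt]] := frag_lt (Hg rho r0 r1 rd).
  subst g.
  have [s' [es' [H' [cs1 cs2]]]] := inv_list H.
  apply: (@le_lt_trans _ _ (m%:R)%:E); last by rewrite lte_fin.
  apply: frag_le; exists s'; split; first by rewrite es'.
  split => //.
  apply: funext => x; rewrite -[in LHS](cs2 x).
  by rewrite c1.
move=> g h h' [gG [K [K0 [d [d0 Hg]]]]] hG c c'.
split.
  apply: in_G_comp; first exact: in_G_comp.
  exact: (@in_G_inv _ h h').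
exists K; split => //; exists d; split => // rho r0 r1 rd.
have [m [[s [e [H ->]]] lt]] := frag_lt (Hg rho r0 r1 rd).
apply: (@le_lt_trans _ _ (m%:R)%:E); last by rewrite lte_fin.
apply: frag_le; exists (map (fun f => h \o f \o h') s).
split; first by rewrite size_map.
split; last exact: comp_list_map.
move=> f' /mapP [f fs ->]; have [fG fr] := H f fs.
split.
  apply: in_G_comp; first exact: in_G_comp.
  exact: (@in_G_inv _ h h').
exact: le_lt_trans (gsize_conj _ hG c c') fr.
Qed.
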